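(* Let $n\ge2$. The metric $g_{ij}(p)=\left(\frac{1}{n-1}-\delta_{ij}\right)p_ip_j$ on $\{p\in\mathbb{C}^n: p_i\neq0\ \forall i\}$ is flat. *)

(* Defs.v *)
From HB Require Import structures.
From mathcomp Require Import all_boot all_order all_algebra.
From mathcomp Require Import all_classical all_reals all_analysis.
From mathcomp Require Import complex.
Set Implicit Arguments. Unset Strict Implicit. Unset Printing Implicit Defensive.
Import Order.TTheory GRing.Theory Num.Theory.
Import numFieldNormedType.Exports.
Local Open Scope ring_scope.

Section Geometry.
Variable C : numFieldType.
Variable n : nat.

(* Holomorphic (C-linear) partial derivative along the j-th coordinate
   of F : C^n -> C at p:  lim_{h -> 0, h in C} (F(p + h e_j) - F p)/h. *)
Definition pderiv (j : 'I_n) (F : 'rV[C]_n -> C) (p : 'rV[C]_n) : C :=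
  derive1 (fun t : C => F (p + t *: delta_mx 0 j)) 0.

Definition christoffel (G : 'rV[C]_n -> 'M[C]_n) (p : 'rV[C]_n)
    (l i j : 'I_n) : C :=
  2^-1 * \sum_(m < n) (invmx (G p)) l m *
     (pderiv i (fun q => G q m j) p + pderiv j (fun q => G q m i) p
      - pderiv m (fun q => G q i j) p).

Definition riemann (G : 'rV[C]_n -> 'M[C]_n) (p : 'rV[C]_n)
    (l i j k : 'I_n) : C :=
  pderiv j (fun q => christoffel G q l i k) p
  - pderiv k (fun q => christoffel G q l i j) p
  + \sum_(m < n) (christoffel G p l j m * christoffel G p m i k
                  - christoffel G p l k m * christoffel G p m i j).

Definition flat_metric_on (U : set 'rV[C]_n) (G : 'rV[C]_n -> 'M[C]_n) : Prop :=
  forall p, U p ->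
    [/\ (G p)^T = G p, G p \in unitmx &
        forall l i j k : 'I_n, riemann G p l i j k = 0].

End Geometry.

Definition torus (C : numFieldType) (n : nat) : set 'rV[C]_n :=
  [set p | forall i : 'I_n, p 0 i != 0].

Definition paper_metric (C : numFieldType) (n : nat) (p : 'rV[C]_n) : 'M[C]_n :=
  \matrix_(a < n, b < n) ((((n - 1)%:R)^-1 - (a == b)%:R) * p 0 a * p 0 b).

(* Main.v *)
Require Import Defs.
From HB Require Import structures.
From mathcomp Require Import all_boot all_order all_algebra.
From mathcomp Require Import all_classical all_reals all_analysis.
From mathcomp Require Import complex.
From mathcomp Require Import ring.
Import Order.TTheory GRing.Theory Num.Theory.
Import numFieldNormedType.Exports.
Local Open Scope ring_scope.

Lemma dl (C : numFieldType) (K a u b v : C) :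
  derive1 (fun t : C => K * (a + t*u) * (b + t*v)) 0 = K * (u*b + a*v).
Proof.
rewrite derive1E.
have c (w : C) : is_derive (0:C) (1:C) (cst w) 0 by exact: is_derive_cst.
have i : is_derive (0:C) (1:C) id 1 by exact: is_derive_id.
have H1 := (is_deriveD (c a) (is_deriveM i (c u))).
have H2 := (is_deriveD (c b) (is_deriveM i (c v))).
have H3 := is_deriveM (is_deriveM (c K) H1) H2.
rewrite (@derive_val _ _ _ _ _ _ _ H3) /=.
have sE (x y : C) : x *: y = x * y by [].
rewrite !fctE /= !scale0r !add0r !scaler0 !addr0 !mul0r !addr0 !sE !mulr1.
ring.
Qed.

Section Proof.
Variable C : numFieldType.
Variable n : nat.
Hypothesis hn : (2 <= n)%N.

Local Notation d a b := ((a == b)%:R : C).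
Local Notation c := (((n - 1)%:R)^-1 : C).
Local Notation G := (@paper_metric C n).

Lemma nz1 : (n - 1)%:R != 0 :> C.
Proof. by rewrite pnatr_eq0 subn_eq0 -ltnNge. Qed.

Lemma nz2 : 2%:R != 0 :> C.
Proof. by rewrite pnatr_eq0. Qed.

Lemma c_mul : c * (n - 1)%:R = 1.
Proof. by apply: mulVf; exact: nz1. Qed.

Lemma sum_dl (b : 'I_n) (x : 'I_n -> C) : \sum_(k < n) d k b * x k = x b.
Proof.
rewrite (bigD1 b) //= eqxx mul1r big1 ?addr0 // => k /negPf ->.
by rewrite mul0r.
Qed.

Lemma sumid (a b : 'I_n) : \sum_(k < n) (c - d a k) * (1 - d k b) = d a b.
Proof.
rewrite (eq_bigr (fun k => c - (d k b * c + d k a * (1 - d k b)))); last first.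
  by move=> k _; rewrite [k == a]eq_sym; ring.
rewrite sumrB big_split /= sumr_const card_ord !sum_dl.
have hn1 : (n - 1).+1 = n by rewrite subn1 prednK // ltnW.
have cn : c *+ (n - 1) = 1 by apply: etrans _ c_mul; rewrite mulr_natr.
rewrite -[X in _ *+ X]hn1 mulrS cn; ring.
Qed.

Definition Mi (q : 'rV[C]_n) : 'M[C]_n :=
  \matrix_(a, b) ((1 - d a b) / (q 0 a * q 0 b)).

Lemma GMi q : torus q -> G q *m Mi q = 1%:M.
Proof.
move=> tq; apply/matrixP => a b; rewrite !mxE.
under eq_bigr => k _ do rewrite !mxE.
transitivity (\sum_k (q 0 a / q 0 b) * ((c - d a k) * (1 - d k b))).
  apply: eq_bigr => k _.
  have := tq k; have := tq b; move=> hb hk.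
  by field; rewrite ?nz1 ?hb ?hk.
rewrite -mulr_sumr sumid.
by case: eqVneq => [->|]; rewrite ?mulr0 ?mulr1 // mulfV // tq.
Qed.

Lemma invG q : torus q -> invmx (G q) = Mi q /\ G q \in unitmx.
Proof.
move=> tq; have h := GMi q tq; have [u _] := mulmx1_unit h; split=> //.
by rewrite -[invmx _]mulmx1 -h mulmxA mulVmx // mul1mx.
Qed.

Lemma pdG q i a b :
  pderiv i (fun q => G q a b) q = (c - d a b) * (d i a * q 0 b + q 0 a * d i b).
Proof.
rewrite /pderiv.
have -> : (fun t : C => G (q + t *: delta_mx 0 i) a b) =
   (fun t => (c - d a b) * (q 0 a + t * d i a) * (q 0 b + t * d i b)).
  by apply/funext => t; rewrite !mxE eqxx /= [a == i]eq_sym [b == i]eq_sym.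
exact: dl.
Qed.

Lemma tR : (true%:R : C) = 1. Proof. by []. Qed.
Lemma fR : (false%:R : C) = 0. Proof. by []. Qed.

Ltac kill := repeat match goal with
  | H : is_true (?x != ?x) |- _ => by rewrite eqxx in H
  | H : is_true (?x != ?y) |- context [?x == ?y] => rewrite (negPf H)
  | H : is_true (?x != ?y) |- context [?y == ?x] => rewrite [y == x]eq_sym (negPf H)
  | |- context [?x == ?x] => rewrite eqxx
  end.

Lemma chr (q : 'rV[C]_n) l i j : torus q -> christoffel G q l i j = d l i * d i j / q 0 l.
Proof.
move=> tq; rewrite /christoffel (invG q tq).1.
under eq_bigr => m _ do rewrite !pdG mxE.
transitivity (2^-1 * \sum_(m < n) (2 * (d i j / q 0 l)) * ((c - d i m) * (1 - d m l))).
  congr (_ * _); apply: eq_bigr => m _.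
  have hl := tq l; have hm := tq m.
  rewrite [l == m]eq_sym.
  case: (eqVneq i m) => [?|im]; case: (eqVneq j m) => [?|jm];
    case: (eqVneq i j) => [?|ij]; subst; kill; rewrite ?tR ?fR; by field; rewrite ?nz1 ?nz2 ?hl ?hm.
rewrite -mulr_sumr sumid [i == l]eq_sym.
by field; rewrite ?nz2 ?(tq l).
Qed.

Lemma near_torus (p : 'rV[C]_n) dd : torus p ->
  \forall t \near (0:C), torus (p + t *: delta_mx 0 dd).
Proof.
move=> tp.
have : \forall t \near (0:C), `|t| < `|p 0 dd| by apply: nbhs0_lt; rewrite normr_gt0 tp.
apply: filterS => t ht a; rewrite !mxE eqxx /=.
case: (eqVneq a dd) => [->|ne]; last by rewrite fR mulr0 addr0 tp.
rewrite tR mulr1; apply/eqP => e.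
have et : t = - p 0 dd by apply/eqP; rewrite -addr_eq0 addrC e.
by move: ht; rewrite et normrN ltxx.
Qed.

Lemma pd_chr0 (p : 'rV[C]_n) dd l i k : torus p -> ~~ [&& l == i, i == k & dd == l] ->
  pderiv dd (fun q => christoffel G q l i k) p = 0.
Proof.
move=> tp h; rewrite /pderiv derive1E.
rewrite (@near_eq_derive _ _ _ _ (cst (d l i * d i k / p 0 l))) ?derive_cst //.
apply: filterS (near_torus p dd tp) => t tt.
rewrite chr // !mxE /= /cst.
case: (eqVneq l dd) => [e|ne]; last by rewrite fR mulr0 addr0.
subst dd; rewrite eqxx andbT in h.
case: (eqVneq l i) => [e|li]; last by rewrite fR !mul0r.
subst i; rewrite eqxx /= in h; by rewrite (negPf h) fR !mulr0 !mul0r.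
Qed.

Lemma riem (p : 'rV[C]_n) l i j k : torus p -> riemann G p l i j k = 0.
Proof.
move=> tp; rewrite /riemann.
rewrite big1 ?addr0; last first.
  move=> m _; rewrite !chr //.
  have key : d l j * d j m * d m i * d i k = d l k * d k m * d m i * d i j.
    rewrite -!natrM !mulnb; congr (_%:R); congr (nat_of_bool _).
    apply/idP/idP.
      by move=> /andP[/andP[/andP[/eqP-> /eqP->] /eqP->] /eqP->]; rewrite !eqxx.
    by move=> /andP[/andP[/andP[/eqP-> /eqP->] /eqP->] /eqP->]; rewrite !eqxx.
  transitivity ((d l j * d j m * d m i * d i k - d l k * d k m * d m i * d i j)
      * ((p 0 l)^-1 * (p 0 m)^-1)); first by ring.
  by rewrite key subrr mul0r.
case: (boolP [&& l == i, i == k, j == l & k == l]).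
  by move=> /and4P[/eqP e1 /eqP e2 /eqP e3 /eqP e4]; subst; rewrite subrr.
move=> h; rewrite !pd_chr0 ?subrr //.
  apply: contra h => /and3P[/eqP e1 /eqP e2 /eqP e3]; subst; by rewrite !eqxx.
apply: contra h => /and3P[/eqP e1 /eqP e2 /eqP e3]; subst; by rewrite !eqxx.
Qed.

Lemma flat : flat_metric_on (@torus C n) G.
Proof.
move=> p tp; split.
- by apply/matrixP => a b; rewrite !mxE eq_sym; ring.
- exact: (invG p tp).2.
- by move=> l i j k; exact: riem.
Qed.

End Proof.

Local Open Scope complex_scope.

Theorem mainTheorem7 (R : realType) (n : nat) (hn : (2 <= n)%N) :
  flat_metric_on (@torus (complex R) n) (@paper_metric (complex R) n).
Proof. exact: flat. Qed.
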